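(* Let $\omega\subset\mathbb{R}^2$ be a bounded domain, let $W$ be a Hilbert space of functions $\omega\to\mathbb{R}^3$, continuously embedded in $L^2(\omega)^3$, with scalar product $(\cdot,\cdot)_*$ and norm $\|\cdot\|_*$, let $\mathcal{F}^k\subset W$ ($k\in\mathbb{N}_0$) be closed linear subspaces, let $f\in L^2(\omega)^3$, $\varepsilon>0$, $\tau>0$, $y^0\in W$, and set $I[y]=\frac12\|y\|_*^2-(f,y)$ and $I'[y;w]=(y,w)_*-(f,w)$. Define $y^k=y^{k-1}+\tau d_ty^k$, where $d_ty^k\in\mathcal{F}^{k-1}$ is such that $(d_ty^k,w)_*+I'[y^k;w]+\frac1\varepsilon(y_3^k,w_3)=-\frac1{2\varepsilon}(p_{\mathrm{ccv}}(y_3^{k-1}),w_3)$ for all $w\in\mathcal{F}^{k-1}$. Then this convex-concavely penalized gradient flow is well defined and satisfies, for all $k\ge1$, $I[y^k]+P_\varepsilon[y_3^k]+\tau\|d_ty^k\|_*^2\le I[y^{k-1}]+P_\varepsilon[y_3^{k-1}]$.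
   Context: $(\cdot,\cdot)$ denotes the $L^2(\omega)$ inner product, and $y_3$ the third component of $y$. The penalty functional is $P_\varepsilon[y_3]=\frac1{2\varepsilon}\int_\omega(y_3-1)_+^2dx$ with $(s)_+=\max\{s,0\}$. The function $p_{\mathrm{ccv}}:\mathbb{R}\to\mathbb{R}$ is $p_{\mathrm{ccv}}(s)=-2$ for $s>1$ and $p_{\mathrm{ccv}}(s)=-2s$ for $s\le1$; it is the derivative of the concave function $P_{\mathrm{ccv}}(s)=-2s+1$ ($s>1$), $-s^2$ ($s\le1$), which satisfies $(s-1)_+^2=s^2+P_{\mathrm{ccv}}(s)$. *)

(* Defs.v *)
From HB Require Import structures.
From mathcomp Require Import all_boot all_order all_algebra.
From mathcomp Require Import all_classical all_reals all_analysis.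
Set Implicit Arguments. Unset Strict Implicit. Unset Printing Implicit Defensive.
Import Order.TTheory GRing.Theory Num.Theory.
Import numFieldNormedType.Exports.
Local Open Scope classical_set_scope.
Local Open Scope ring_scope.

Section Defs.
Variable R : realType.

Definition leb2 := ((@lebesgue_measure R) \x (@lebesgue_measure R))%E.

(** index of the third component y_3 *)
Definition i3 : 'I_3 := @Ordinal 3 2 isT.

Definition pos_part (s : R) : R := Num.max s 0.

Definition p_ccv (s : R) : R := if 1 < s then -2 else -2 * s.
Definition P_ccv (s : R) : R := if 1 < s then -2 * s + 1 else - s ^+ 2.

Definition L2ip1 (om : set (R * R)) (u v : R * R -> R) : R :=
  Rintegral leb2 om (fun x => u x * v x).

Definition L2ip3 (om : set (R * R)) (u v : 'I_3 -> R * R -> R) : R :=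
  \sum_(i < 3) L2ip1 om (u i) (v i).

Definition isL2 (om : set (R * R)) (u : R * R -> R) : Prop :=
  measurable_fun om u /\ leb2.-integrable om (fun x => (u x ^+ 2)%:E).

Definition Peps (om : set (R * R)) (eps : R) (s : R * R -> R) : R :=
  (2 * eps)^-1 * Rintegral leb2 om (fun x => pos_part (s x - 1) ^+ 2).

Definition bounded_domain (om : set (R * R)) : Prop :=
  open om /\ connected om /\ om !=set0 /\
  exists M : R, forall x, om x -> `|x.1| <= M /\ `|x.2| <= M.

Variable W : completeNormedModType R.

(** ip is a scalar product on W inducing the norm of W (so W is a Hilbert space) *)
Definition inner_product_of_norm (ip : W -> W -> R) : Prop :=
  (forall x y, ip x y = ip y x) /\
  (forall a x y z, ip (a *: x + y) z = a * ip x z + ip y z) /\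
  (forall x, ip x x = `|x| ^+ 2).

(** iota realises W as a space of functions omega -> R^3, linearly and
    continuously embedded in L^2(omega)^3 *)
Definition cont_embedding (om : set (R * R)) (iota : W -> 'I_3 -> R * R -> R) : Prop :=
  (forall a x y i p, iota (a *: x + y) i p = a * iota x i p + iota y i p) /\
  (forall x y, (forall i p, om p -> iota x i p = iota y i p) -> x = y) /\
  (forall x i, isL2 om (iota x i)) /\
  (exists C : R, forall x, Num.sqrt (L2ip3 om (iota x) (iota x)) <= C * `|x|).

Definition closed_subspace (F : set W) : Prop :=
  closed F /\ F 0 /\ (forall a x y, F x -> F y -> F (a *: x + y)).

Variables (om : set (R * R)) (ip : W -> W -> R) (iota : W -> 'I_3 -> R * R -> R)
  (f : 'I_3 -> R * R -> R).

Definition Ienergy (y : W) : R := 2^-1 * `|y| ^+ 2 - L2ip3 om f (iota y).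
Definition Ideriv (y w : W) : R := ip y w - L2ip3 om f (iota w).

(** one step of the convex-concavely penalized gradient flow: d = d_t y^k is an
    admissible update from yprev = y^{k-1} in the subspace Fk = F^{k-1} *)
Definition ccv_step (eps tau : R) (Fk : set W) (yprev d : W) : Prop :=
  Fk d /\
  forall w, Fk w ->
    ip d w + Ideriv (yprev + tau *: d) w
      + eps^-1 * L2ip1 om (iota (yprev + tau *: d) i3) (iota w i3)
    = - (2 * eps)^-1 * L2ip1 om (fun x => p_ccv (iota yprev i3 x)) (iota w i3).

(** discrete time derivative d_t y^{k+1} = (y^{k+1} - y^k)/tau *)
Definition dt (tau : R) (y : nat -> W) (k : nat) : W := tau^-1 *: (y k.+1 - y k).

End Defs.

(* Main.v *)
Require Import Defs.
From HB Require Import structures.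
From mathcomp Require Import all_boot all_order all_algebra.
From mathcomp Require Import all_classical all_reals all_analysis.
From mathcomp Require Import measurable_realfun lebesgue_integral.
From mathcomp Require Import ring lra.
Import Order.TTheory GRing.Theory Num.Theory.
Import numFieldNormedType.Exports.
Local Open Scope classical_set_scope.
Local Open Scope ring_scope.
Set Implicit Arguments. Unset Strict Implicit.

Lemma sq_le_abs (R : realType) (a b : R) : 0 <= b -> a ^+ 2 <= b ^+ 2 -> `|a| <= b.
Proof.
move=> hb h; have h0 := normr_ge0 a; have e : `|a| ^+ 2 = a ^+ 2 by rewrite real_normK ?num_real.
rewrite -e in h; nra.
Qed.

Lemma disc_le (R : realType) (A B C : R) : 0 <= A -> 0 <= C ->
  (forall t, 0 <= A + 2 * t * B + t ^+ 2 * C) -> B ^+ 2 <= A * C.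
Proof.
move=> hA hC H.
have [C0|Cpos] := eqVneq C 0.
  rewrite C0 mulr0.
  have [B0|Bn0] := eqVneq B 0; first by rewrite B0 expr0n.
  have := H (- (A + 1) / (2 * B)); rewrite C0 mulr0 addr0.
  have -> : 2 * (- (A + 1) / (2 * B)) * B = - (A + 1) by field.
  lra.
have Cp : 0 < C by rewrite lt_def Cpos hC.
have := H (- B / C).
have -> : A + 2 * (- B / C) * B + (- B / C) ^+ 2 * C = A - B ^+ 2 / C by field.
rewrite subr_ge0 ler_pdivrMr //.
Qed.

Lemma lin_facts (R : realType) (W : lmodType R) (g : W -> R) :
  (forall s x y, g (s *: x + y) = s * g x + g y) ->
  [/\ g 0 = 0, forall x y, g (x + y) = g x + g y,
      forall s x, g (s *: x) = s * g x & forall x y, g (x - y) = g x - g y].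
Proof.
move=> H.
have g0 : g 0 = 0 by have := H 1 0 0; rewrite scale1r addr0 mul1r; lra.
have gD : forall x y, g (x + y) = g x + g y.
  by move=> x y; have := H 1 x y; rewrite scale1r mul1r.
have gZ : forall s x, g (s *: x) = s * g x.
  by move=> s x; have := H s x 0; rewrite !addr0 g0 addr0.
split => // x y; rewrite gD -scaleN1r gZ; ring.
Qed.

Lemma quadE (R : realType) (W : lmodType R) (a : W -> W -> R) :
  (forall x y, a x y = a y x) ->
  (forall s x y z, a (s *: x + y) z = s * a x z + a y z) ->
  forall s t x y, a (s *: x + t *: y) (s *: x + t *: y)
    = s ^+ 2 * a x x + 2 * s * t * a x y + t ^+ 2 * a y y.
Proof.
move=> Hs Hl s t x y.
have e1 : forall z, a (s *: x + t *: y) z = s * a x z + t * a y z.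
  move=> z; rewrite Hl; have [_ _ gZ _] := @lin_facts R W (fun w => a w z) (fun s x y => Hl s x y z).
  by rewrite gZ.
rewrite e1 (Hs x) (Hs y) !e1 (Hs y x); ring.
Qed.

Lemma sq_lt_abs (R : realType) (a b : R) : 0 <= b -> a ^+ 2 < b ^+ 2 -> `|a| < b.
Proof.
move=> hb h; have h0 := normr_ge0 a; have e : `|a| ^+ 2 = a ^+ 2 by rewrite real_normK ?num_real.
rewrite -e in h; nra.
Qed.

Lemma sq_lt (R : realType) (x b : R) : 0 <= x -> 0 <= b -> x ^+ 2 < b ^+ 2 -> x < b.
Proof. move=> hx hb h; nra. Qed.

Lemma arch_inv (R : realType) (x : R) : 0 < x -> exists N : nat, N.+1%:R^-1 < x.
Proof.
move=> hx; exists (Num.trunc x^-1).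
by rewrite -ltf_pV2 ?posrE ?invr_gt0 // invrK truncnS_gt.
Qed.

Lemma inv_mono (R : realType) (N n : nat) : (N <= n)%N -> n.+1%:R^-1 <= N.+1%:R^-1 :> R.
Proof. by move=> h; rewrite lef_pV2 ?posrE // ler_nat ltnS. Qed.

Lemma lax_milgram (R : realType) (W : completeNormedModType R) (a : W -> W -> R)
  (l : W -> R) (F : set W) (K L : R) :
  closed_subspace F ->
  (forall x y, a x y = a y x) ->
  (forall s x y z, a (s *: x + y) z = s * a x z + a y z) ->
  (forall u, `|u| ^+ 2 <= a u u) ->
  (forall u v, `|a u v| <= K * `|u| * `|v|) ->
  (forall s x y, l (s *: x + y) = s * l x + l y) ->
  (forall u, `|l u| <= L * `|u|) ->
  exists d, F d /\ forall w, F w -> a d w = l w.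
Proof.
move=> [Fcl [F0 FL]] Hs Hl Hc Hb Hll Hlb.
pose J u := 2^-1 * a u u - l u.
have aq := @quadE R W a Hs Hl.
have [l0 lD lZ lB] := @lin_facts R W l Hll.
have FZ : forall s x, F x -> F (s *: x).
  by move=> s x Fx; rewrite -[s *: x]addr0; exact: FL.
have FD : forall x y, F x -> F y -> F (x + y).
  by move=> x y Fx Fy; rewrite -[x]scale1r; exact: FL.
have JQ : forall s t x y, J (s *: x + t *: y) = 2^-1 * s ^+ 2 * a x x + s * t * a x y
   + 2^-1 * t ^+ 2 * a y y - s * l x - t * l y.
  move=> s t x y; by rewrite /J aq lD !lZ; field.
have Jlow : forall u, - (L ^+ 2) / 2 <= J u.
  move=> u; have := Hc u; have := Hlb u; rewrite ler_norml => /andP[h1 h2] h3.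
  have := sqr_ge0 (`|u| - L); rewrite /J; nra.
pose S := J @` F.
have hS : has_inf S.
  split; first by exists (J 0), 0.
  by exists (- (L ^+ 2) / 2) => z [u _ <-]; apply: Jlow.
pose m := inf S.
have hm : forall u, F u -> m <= J u.
  by move=> u Fu; apply: (ge_inf hS.2); exists u.
pose ep (n : nat) : R := n.+1%:R^-1.
have : forall n : nat, exists u, F u /\ J u < m + ep n.
  move=> n; have hpos : 0 < n.+1%:R^-1 :> R by rewrite invr_gt0 ltr0n.
  have [_ [u Fu <-] he] := inf_adherent hpos hS.
  by exists u.
move=> /choice [u Hu].
have est : forall n k, `|u n - u k| ^+ 2 <= 4 * (ep n + ep k).
  move=> n k.
  have Fmid : F (2^-1 *: u n + 2^-1 *: u k) by apply: FL; [case: (Hu n)|apply: FZ; case: (Hu k)].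
  have h1 := hm _ Fmid; rewrite JQ in h1.
  have h2 := Hc (u n - u k).
  have e : a (u n - u k) (u n - u k) = a (u n) (u n) - 2 * a (u n) (u k) + a (u k) (u k).
    rewrite (_ : u n - u k = 1 *: u n + (-1) *: u k) ?aq; first ring.
    by rewrite scale1r scaleN1r.
  rewrite e in h2.
  have := (Hu n).2; have := (Hu k).2; rewrite /J.
  move=> hk hn.
  have e2 : 2^-1 * (2^-1 : R) ^+ 2 = 8^-1 by field.
  have e3 : 2^-1 / 2 = 4^-1 :> R by field.
  rewrite e2 e3 in h1.
  lra.
have cv : cvg (u @ \oo).
  apply: cauchy_cvg; apply: cauchy_exP => e he.
  have e8 : 0 < e ^+ 2 / 8 by rewrite divr_gt0 // exprn_gt0.
  have [N hN] := @arch_inv R _ e8.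
  have {}hN : ep N < e ^+ 2 / 8 := hN.
  exists (u N); exists N => // n /= hNn.
  rewrite -ball_normE /ball_ /=.
  apply: (@sq_lt R); [exact: normr_ge0|exact: ltW|].
  have := est N n; have : ep n <= ep N by apply: (@inv_mono R).
  lra.
set d := lim (u @ \oo).
have Fd : F d.
  apply: (closed_cvg F Fcl _ d cv).
  by apply: nearW => n; case: (Hu n).
have Jd : J d <= m.
  apply/ler_addgt0Pr => e he.
  pose M := `|K| * `|d| + `|L| + 1.
  have Mpos : 0 < M by rewrite /M; have := normr_ge0 L; have := mulr_ge0 (normr_ge0 K) (normr_ge0 d); lra.
  have eM : 0 < e / (2 * M) by rewrite divr_gt0 // mulr_gt0.
  have [N1 _ HN1] := cvgr_dist_lt u d cv _ eM.
  have e2 : 0 < e / 2 by rewrite divr_gt0.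
  have [N2 hN2] := @arch_inv R _ e2.
  have {}hN2 : ep N2 < e / 2 := hN2.
  pose n := maxn N1 N2.
  have h1 : `|d - u n| < e / (2 * M) by apply: HN1; rewrite /= leq_maxl.
  have h2 : ep n < e / 2 by apply: le_lt_trans hN2; apply: (@inv_mono R); rewrite leq_maxr.
  have Hun := (Hu n).2.
  set v := d - u n in h1.
  have eu : u n = 1 *: d + (-1) *: v by rewrite /v scale1r scaleN1r opprB addrC subrK.
  rewrite eu JQ in Hun.
  have hA : a d v <= `|K| * `|d| * `|v|.
    have := Hb d v; rewrite ler_norml => /andP[_ hb].
    have := ler_norm K; have := mulr_ge0 (normr_ge0 d) (normr_ge0 v); nra.
  have hL : - l v <= `|L| * `|v|.
    have := Hlb v; rewrite ler_norml => /andP[hb _].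
    have := ler_norm L; have := normr_ge0 v; nra.
  have hvv : 0 <= a v v by apply: le_trans (Hc v); exact: sqr_ge0.
  have hv : M * `|v| < e / 2.
    move: h1; rewrite ltr_pdivlMr ?mulr_gt0 // => h1; nra.
  have := normr_ge0 v; rewrite /J; move: Hun; rewrite /M in hv; rewrite expr1n sqrrN expr1n !mulr1 !mul1r !mulN1r; nra.
move=> {est}.
exists d; split => // w Fw.
have H : forall t, 0 <= t * (a d w - l w) + t ^+ 2 * (2^-1 * a w w).
  move=> t; have Ft : F (1 *: d + t *: w) by apply: FL => //; exact: FZ.
  have := hm _ Ft; rewrite JQ; move: Jd; rewrite /J; nra.
have hB : 0 <= 2^-1 * a w w by apply: mulr_ge0 => //; apply: le_trans (Hc w); exact: sqr_ge0.
move: hB (H (- (a d w - l w) / (2^-1 * a w w + 1))).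
set A := a d w - l w; set B := 2^-1 * a w w => hB.
have B1 : B + 1 != 0 by rewrite gt_eqF // ltr_wpDl.
have -> : - A / (B + 1) * A + (- A / (B + 1)) ^+ 2 * B = - (A ^+ 2 / (B + 1) ^+ 2) by field.
rewrite oppr_ge0 ler_pdivrMr ?exprn_gt0 ?ltr_wpDl // mul0r => hA2.
have : A == 0 by rewrite -sqrf_eq0 eq_le hA2 sqr_ge0.
by rewrite /A subr_eq0 => /eqP.
Qed.

Lemma int_dom (R : realType) (om : set (R * R)) (f g : R * R -> R) :
  measurable om -> measurable_fun om f -> (forall x, om x -> `|f x| <= `|g x|) ->
  (@leb2 R).-integrable om (EFin \o g) -> (@leb2 R).-integrable om (EFin \o f).
Proof.
move=> mom mf hfg ig; apply: le_integrable ig => //.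
exact/measurable_EFinP.
Qed.

Lemma intD' (R : realType) (om : set (R * R)) (f g : R * R -> R) : measurable om ->
  (@leb2 R).-integrable om (EFin \o f) -> (@leb2 R).-integrable om (EFin \o g) ->
  (@leb2 R).-integrable om (EFin \o (fun x => f x + g x)).
Proof.
move=> mom hf hg; apply: eq_integrable (integrableD _ hf hg) => //.
Qed.

Lemma intZ' (R : realType) (om : set (R * R)) (k : R) (f : R * R -> R) : measurable om ->
  (@leb2 R).-integrable om (EFin \o f) ->
  (@leb2 R).-integrable om (EFin \o (fun x => k * f x)).
Proof.
move=> mom hf; apply: eq_integrable (integrableZl _ k hf) => //.
Qed.

Lemma L2_lin (R : realType) (om : set (R * R)) (s : R) (u v : R * R -> R) :
  measurable om -> isL2 om u -> isL2 om v -> isL2 om (fun x => s * u x + v x).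
Proof.
move=> mom [mu iu] [mv iv]; split.
  exact: measurable_funD (measurable_funM (measurable_cst _) mu) mv.
have mw : measurable_fun om (fun x => s * u x + v x).
  exact: measurable_funD (measurable_funM (measurable_cst _) mu) mv.
apply: (@int_dom _ _ _ (fun x => 2 * s ^+ 2 * u x ^+ 2 + 2 * v x ^+ 2)) => //.
- exact: measurable_funX.
- move=> x _; have h1 := sqr_ge0 s; have h2 := sqr_ge0 (u x); have h3 := sqr_ge0 (v x).
  rewrite !ger0_norm ?sqr_ge0 //; last by nra.
  have := sqr_ge0 (s * u x - v x); nra.
- apply: intD' => //; last exact: intZ' mom iv.
  exact: (@intZ' _ _ (2 * s ^+ 2) (fun x => u x ^+ 2) mom iu).
Qed.

Lemma L2_prod_int (R : realType) (om : set (R * R)) (u v : R * R -> R) :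
  measurable om -> isL2 om u -> isL2 om v ->
  (@leb2 R).-integrable om (EFin \o (fun x => u x * v x)).
Proof.
move=> mom [mu iu] [mv iv].
apply: (@int_dom _ _ _ (fun x => u x ^+ 2 + v x ^+ 2)) => //.
- exact: measurable_funM.
- move=> x _; rewrite [X in _ <= X]ger0_norm ?addr_ge0 ?sqr_ge0 // normrM.
  have e1 : `|u x| ^+ 2 = u x ^+ 2 by rewrite real_normK ?num_real.
  have e2 : `|v x| ^+ 2 = v x ^+ 2 by rewrite real_normK ?num_real.
  have := sqr_ge0 (`|u x| - `|v x|); have := normr_ge0 (u x); have := normr_ge0 (v x); nra.
- exact: intD'.
Qed.

Lemma L2ip1_sym (R : realType) (om : set (R * R)) (u v : R * R -> R) :
  L2ip1 om u v = L2ip1 om v u.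
Proof. by rewrite /L2ip1; apply: eq_Rintegral => x _; rewrite mulrC. Qed.

Lemma L2ip1_lin (R : realType) (om : set (R * R)) (s : R) (x y z : R * R -> R) :
  measurable om -> isL2 om x -> isL2 om y -> isL2 om z ->
  L2ip1 om (fun p => s * x p + y p) z = s * L2ip1 om x z + L2ip1 om y z.
Proof.
move=> mom hx hy hz; rewrite /L2ip1.
rewrite (@eq_Rintegral _ _ _ (@leb2 R) om (fun p => s * (x p * z p) + y p * z p)); last first.
  by move=> p _; rewrite mulrDl mulrA.
rewrite RintegralD //; last exact: L2_prod_int.
  by rewrite RintegralZl //; exact: L2_prod_int.
by apply: intZ' => //; exact: L2_prod_int.
Qed.

Lemma L2ip1_ge0 (R : realType) (om : set (R * R)) (u : R * R -> R) :
  0 <= L2ip1 om u u.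
Proof. by apply: Rintegral_ge0 => x _; rewrite -expr2 sqr_ge0. Qed.

Lemma L2_CS (R : realType) (om : set (R * R)) (u v : R * R -> R) :
  measurable om -> isL2 om u -> isL2 om v ->
  L2ip1 om u v ^+ 2 <= L2ip1 om u u * L2ip1 om v v.
Proof.
move=> mom hu hv; apply: disc_le; [exact: L2ip1_ge0|exact: L2ip1_ge0|] => t.
have hw := @L2_lin R om t v u mom hv hu.
have := L2ip1_ge0 om (fun p => t * v p + u p).
rewrite L2ip1_lin // (L2ip1_sym om v) (L2ip1_sym om u) !L2ip1_lin // (L2ip1_sym om v u).
nra.
Qed.

Lemma iotaE (R : realType) (W : completeNormedModType R) (om : set (R * R))
  (iota : W -> 'I_3 -> R * R -> R) (Hiota : cont_embedding om iota) s x y i :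
  iota (s *: x + y) i = (fun p => s * iota x i p + iota y i p).
Proof. by apply/funext => p; case: Hiota => h _; exact: h. Qed.

Lemma iotaL2 (R : realType) (W : completeNormedModType R) (om : set (R * R))
  (iota : W -> 'I_3 -> R * R -> R) (Hiota : cont_embedding om iota) x i :
  isL2 om (iota x i).
Proof. by case: Hiota => _ [_ [h _]]. Qed.

Lemma iota_bound (R : realType) (W : completeNormedModType R) (om : set (R * R))
  (iota : W -> 'I_3 -> R * R -> R) (Hiota : cont_embedding om iota) :
  exists C, 0 <= C /\ forall x i, L2ip1 om (iota x i) (iota x i) <= C * `|x| ^+ 2.
Proof.
case: Hiota => _ [_ [_ [C0 hC]]]; exists (C0 ^+ 2); split; first exact: sqr_ge0.
move=> x i; have hs := hC x.
have S0 : 0 <= L2ip3 om (iota x) (iota x).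
  by apply: sumr_ge0 => j _; exact: L2ip1_ge0.
have hi : L2ip1 om (iota x i) (iota x i) <= L2ip3 om (iota x) (iota x).
  rewrite /L2ip3 (bigD1 i) //= lerDl; apply: sumr_ge0 => j _; exact: L2ip1_ge0.
have e := sqr_sqrtr S0.
have s0 := sqrtr_ge0 (L2ip3 om (iota x) (iota x)).
have n0 := normr_ge0 x.
rewrite -e in hi; apply: (le_trans hi); rewrite -exprMn; nra.
Qed.

Lemma bound_L2 (R : realType) (W : completeNormedModType R) (om : set (R * R))
  (iota : W -> 'I_3 -> R * R -> R) (Hiota : cont_embedding om iota)
  (mom : measurable om) (g : R * R -> R) (hg : isL2 om g) i :
  exists M, forall w, `|L2ip1 om g (iota w i)| <= M * `|w|.
Proof.
have [C [C0 hC]] := iota_bound Hiota.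
exists (Num.sqrt (L2ip1 om g g) * Num.sqrt C) => w.
apply: sq_le_abs.
  by rewrite mulr_ge0 ?mulr_ge0 ?sqrtr_ge0.
have hcs := L2_CS mom hg (iotaL2 Hiota w i).
have A0 := L2ip1_ge0 om g.
rewrite !exprMn !sqr_sqrtr //.
apply: (le_trans hcs); rewrite -mulrA; apply: ler_wpM2l => //; exact: hC.
Qed.

Lemma ip_CS (R : realType) (W : completeNormedModType R) (ip : W -> W -> R)
  (Hip : inner_product_of_norm ip) x y : `|ip x y| <= `|x| * `|y|.
Proof.
case: Hip => Hs [Hl Hn].
apply: sq_le_abs; first by rewrite mulr_ge0.
rewrite exprMn -!Hn; apply: disc_le; rewrite ?Hn ?sqr_ge0 // => t.
have := @quadE R W ip Hs Hl 1 t x y.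
rewrite !Hn expr1n mul1r mulr1 => h.
have := sqr_ge0 `|1 *: x + t *: y|; rewrite h.
done.
Qed.

Lemma p_ccvE (R : realType) (s : R) : p_ccv s = -2 * Num.min s 1.
Proof.
rewrite /p_ccv; case: ltgtP => h.
- by rewrite mulr1.
- by [].
- lra.
Qed.

Lemma pw_ineq (R : realType) (a b : R) :
  pos_part (a - 1) ^+ 2 - pos_part (b - 1) ^+ 2 <= 2 * a * (a - b) + p_ccv b * (a - b).
Proof.
rewrite /pos_part /p_ccv.
have h1 := sqr_ge0 (a - b); have h2 := sqr_ge0 (a - 1); have h3 := sqr_ge0 (b - 1).
have h4 := sqr_ge0 (a - 1 - (b - 1)).
have [ha|ha] := leP (a - 1) 0; have [hb|hb] := leP (b - 1) 0; case: ltP => hc; rewrite ?expr0n /=.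
- lra.
- nra.
- lra.
- nra.
- nra.
- nra.
- nra.
- nra.
Qed.


Lemma pccv_L2 (R : realType) (om : set (R * R)) (u : R * R -> R) :
  measurable om -> isL2 om u -> isL2 om (fun x => p_ccv (u x)).
Proof.
move=> mom [mu iu].
have mg : measurable_fun om (fun x => p_ccv (u x)).
  rewrite (_ : (fun x => p_ccv (u x)) = (fun x => -2 * Num.min (u x) 1)); last first.
    by apply/funext => x; rewrite p_ccvE.
  exact: measurable_funM (measurable_cst _) (measurable_minr mu (measurable_cst _)).
split => //.
apply: (@int_dom _ _ (fun x => p_ccv (u x) ^+ 2) (fun x => 4 * u x ^+ 2)) => //.
- exact: measurable_funX.
- move=> x _.
  have e1 : `|p_ccv (u x) ^+ 2| = p_ccv (u x) ^+ 2 by rewrite ger0_norm // sqr_ge0.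
  have e2 : `|4 * u x ^+ 2| = 4 * u x ^+ 2 by rewrite ger0_norm // mulr_ge0 // sqr_ge0.
  rewrite e1 e2 /p_ccv; case: ltP => h; nra.
- exact: (@intZ' _ _ 4 (fun x => u x ^+ 2) mom iu).
Qed.

Lemma pos_int (R : realType) (om : set (R * R)) (u : R * R -> R) :
  measurable om -> isL2 om u ->
  (@leb2 R).-integrable om (EFin \o (fun x => pos_part (u x - 1) ^+ 2)).
Proof.
move=> mom [mu iu].
apply: (@int_dom _ _ _ (fun x => u x ^+ 2)) => //.
- apply: measurable_funX; apply: measurable_maxr (measurable_cst _).
  exact: measurable_funB mu (measurable_cst _).
- move=> x _.
  rewrite [X in _ <= X]ger0_norm ?sqr_ge0 // ger0_norm ?sqr_ge0 //.
  rewrite /pos_part; have h0 := sqr_ge0 (u x); have [h|h] := leP (u x - 1) 0.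
    by rewrite expr0n.
  nra.
Qed.

Lemma intB' (R : realType) (om : set (R * R)) (f g : R * R -> R) : measurable om ->
  (@leb2 R).-integrable om (EFin \o f) -> (@leb2 R).-integrable om (EFin \o g) ->
  (@leb2 R).-integrable om (EFin \o (fun x => f x - g x)).
Proof.
move=> mom hf hg; apply: eq_integrable (integrableB _ hf hg) => //.
Qed.

Lemma L2r_lin (R : realType) (W : completeNormedModType R) (om : set (R * R))
  (iota : W -> 'I_3 -> R * R -> R) (Hiota : cont_embedding om iota)
  (mom : measurable om) (h : R * R -> R) (hh : isL2 om h) s x y i :
  L2ip1 om h (iota (s *: x + y) i) = s * L2ip1 om h (iota x i) + L2ip1 om h (iota y i).
Proof.
rewrite (iotaE Hiota) L2ip1_sym L2ip1_lin //; try exact: (iotaL2 Hiota).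
by rewrite !(L2ip1_sym om h).
Qed.

Lemma L2l_lin (R : realType) (W : completeNormedModType R) (om : set (R * R))
  (iota : W -> 'I_3 -> R * R -> R) (Hiota : cont_embedding om iota)
  (mom : measurable om) (h : R * R -> R) (hh : isL2 om h) s x y i :
  L2ip1 om (iota (s *: x + y) i) h = s * L2ip1 om (iota x i) h + L2ip1 om (iota y i) h.
Proof. by rewrite !(L2ip1_sym om _ h) (L2r_lin Hiota). Qed.

Lemma Lf_lin (R : realType) (W : completeNormedModType R) (om : set (R * R))
  (iota : W -> 'I_3 -> R * R -> R) (Hiota : cont_embedding om iota)
  (mom : measurable om) (f : 'I_3 -> R * R -> R) (Hf : forall i, isL2 om (f i)) s x y :
  L2ip3 om f (iota (s *: x + y)) = s * L2ip3 om f (iota x) + L2ip3 om f (iota y).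
Proof.
rewrite /L2ip3 mulr_sumr -big_split /=; apply: eq_bigr => i _.
exact: (L2r_lin Hiota).
Qed.

Lemma int_ineq (R : realType) (om : set (R * R)) (mom : measurable om)
  (u v : R * R -> R) (hu : isL2 om u) (hv : isL2 om v) (t : R) :
  Rintegral (@leb2 R) om (fun x => pos_part (t * v x + u x - 1) ^+ 2)
  - Rintegral (@leb2 R) om (fun x => pos_part (u x - 1) ^+ 2)
  <= 2 * t * L2ip1 om (fun x => t * v x + u x) v + t * L2ip1 om (fun x => p_ccv (u x)) v.
Proof.
have hY := L2_lin t mom hv hu.
have hg := pccv_L2 mom hu.
rewrite -RintegralB //; try exact: pos_int.
rewrite /L2ip1 -!RintegralZl //; try exact: L2_prod_int.
rewrite -RintegralD //; try (apply: intZ' => //; exact: L2_prod_int).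
apply: le_Rintegral => //.
- by apply: intB' => //; exact: pos_int.
- by apply: intD' => //; apply: intZ' => //; exact: L2_prod_int.
move=> x _.
have := pw_ineq (t * v x + u x) (u x).
have -> : t * v x + u x - u x = t * v x by ring.
have -> : 2 * t * ((t * v x + u x) * v x) + t * (p_ccv (u x) * v x)
  = 2 * (t * v x + u x) * (t * v x) + p_ccv (u x) * (t * v x) by ring.
done.
Qed.

Definition aform (R : realType) (W : completeNormedModType R) (om : set (R * R))
  (ip : W -> W -> R) (iota : W -> 'I_3 -> R * R -> R) (eps tau : R) (u v : W) : R :=
  (1 + tau) * ip u v + tau / eps * L2ip1 om (iota u i3) (iota v i3).

Definition lform (R : realType) (W : completeNormedModType R) (om : set (R * R))
  (ip : W -> W -> R) (iota : W -> 'I_3 -> R * R -> R) (f : 'I_3 -> R * R -> R)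
  (eps : R) (yprev w : W) : R :=
  L2ip3 om f (iota w) - ip yprev w - eps^-1 * L2ip1 om (iota yprev i3) (iota w i3)
  - (2 * eps)^-1 * L2ip1 om (fun x => p_ccv (iota yprev i3 x)) (iota w i3).

Lemma ccv_identity (R : realType) (W : completeNormedModType R) (om : set (R * R))
  (mom : measurable om) (ip : W -> W -> R) (Hip : inner_product_of_norm ip)
  (iota : W -> 'I_3 -> R * R -> R) (Hiota : cont_embedding om iota)
  (f : 'I_3 -> R * R -> R) (eps tau : R) (heps : eps != 0) (yprev d w : W) :
  ip d w + Ideriv om ip iota f (yprev + tau *: d) w
    + eps^-1 * L2ip1 om (iota (yprev + tau *: d) i3) (iota w i3)
  - (- (2 * eps)^-1 * L2ip1 om (fun x => p_ccv (iota yprev i3 x)) (iota w i3))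
  = aform om ip iota eps tau d w - lform om ip iota f eps yprev w.
Proof.
case: Hip => Hs [Hl Hn].
rewrite /Ideriv (addrC yprev (tau *: d)) Hl (L2l_lin Hiota) //; last exact: (iotaL2 Hiota).
rewrite /aform /lform; field; exact: heps.
Qed.

Unset Implicit Arguments. Set Strict Implicit.

Theorem proposition6p1 (R : realType) (om : set (R * R))
  (Hom : bounded_domain om) (Hmeas : measurable om)
  (W : completeNormedModType R) (ip : W -> W -> R)
  (Hip : inner_product_of_norm ip)
  (iota : W -> 'I_3 -> R * R -> R) (Hiota : cont_embedding om iota)
  (F : nat -> set W) (HF : forall k, closed_subspace (F k))
  (f : 'I_3 -> R * R -> R) (Hf : forall i, isL2 om (f i))
  (eps tau : R) (Heps : 0 < eps) (Htau : 0 < tau) (y0 : W) :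
  (* well-definedness: every step has a unique update d_t y^k in F^{k-1} *)
  (forall (k : nat) (yprev : W),
      exists! d : W, ccv_step om ip iota f eps tau (F k) yprev d) /\
  (* energy decrease along the scheme started at y^0 *)
  (forall y : nat -> W, y 0%N = y0 ->
     (forall k : nat, ccv_step om ip iota f eps tau (F k) (y k) (dt tau y k)) ->
     forall k : nat,
       Ienergy om iota f (y k.+1) + Peps om eps (iota (y k.+1) i3)
         + tau * `|dt tau y k| ^+ 2
       <= Ienergy om iota f (y k) + Peps om eps (iota (y k) i3)).
Proof.
have Hip' := Hip; case: Hip' => Hs [Hl Hn].
have heps : eps != 0 by rewrite gt_eqF.
have [C [C0 hC]] := iota_bound Hiota.
have L2b : forall u v : W, `|L2ip1 om (iota u i3) (iota v i3)| <= C * `|u| * `|v|.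
  move=> u v; apply: sq_le_abs; first by rewrite !mulr_ge0.
  apply: (le_trans (L2_CS Hmeas (iotaL2 Hiota u i3) (iotaL2 Hiota v i3))).
  have hu := hC u i3; have hv := hC v i3.
  have := L2ip1_ge0 om (iota u i3); have := L2ip1_ge0 om (iota v i3).
  rewrite !exprMn; nra.
have asym : forall u v, aform om ip iota eps tau u v = aform om ip iota eps tau v u.
  by move=> u v; rewrite /aform Hs L2ip1_sym.
have alin : forall s x y z, aform om ip iota eps tau (s *: x + y) z
    = s * aform om ip iota eps tau x z + aform om ip iota eps tau y z.
  move=> s x y z; rewrite /aform Hl (L2l_lin Hiota) //; last exact: (iotaL2 Hiota).
  ring.
have acoer : forall u, `|u| ^+ 2 <= aform om ip iota eps tau u u.
  move=> u; rewrite /aform Hn.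
  have := mulr_ge0 (ltW (divr_gt0 Htau Heps)) (L2ip1_ge0 om (iota u i3)).
  have := sqr_ge0 `|u|; nra.
have abnd : forall u v, `|aform om ip iota eps tau u v| <= (1 + tau + tau / eps * C) * `|u| * `|v|.
  move=> u v; rewrite /aform; apply: (le_trans (ler_normD _ _)).
  have e1 : `|(1 + tau) * ip u v| = (1 + tau) * `|ip u v|.
    by rewrite normrM ger0_norm // addr_ge0 // ltW.
  have e2 : `|tau / eps * L2ip1 om (iota u i3) (iota v i3)|
      = tau / eps * `|L2ip1 om (iota u i3) (iota v i3)|.
    by rewrite normrM (ger0_norm (x := tau / eps)) // ltW // divr_gt0.
  rewrite e1 e2.
  have t1 : (1 + tau) * `|ip u v| <= (1 + tau) * (`|u| * `|v|).
    by apply: ler_wpM2l; [rewrite addr_ge0 // ltW | exact: ip_CS].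
  have t2 : tau / eps * `|L2ip1 om (iota u i3) (iota v i3)| <= tau / eps * (C * `|u| * `|v|).
    by apply: ler_wpM2l; [rewrite ltW // divr_gt0 | exact: L2b].
  have -> : (1 + tau + tau / eps * C) * `|u| * `|v|
    = (1 + tau) * (`|u| * `|v|) + tau / eps * (C * `|u| * `|v|) by ring.
  exact: lerD t1 t2.
split.
- move=> k yprev.
  have hg := pccv_L2 Hmeas (iotaL2 Hiota yprev i3).
  have llin : forall s x y, lform om ip iota f eps yprev (s *: x + y)
      = s * lform om ip iota f eps yprev x + lform om ip iota f eps yprev y.
    move=> s x y; rewrite /lform (Lf_lin Hiota) // Hs Hl (Hs x) (Hs y).
    rewrite !(L2r_lin Hiota) //; last exact: (iotaL2 Hiota).
    ring.
  have : forall i, exists M, forall w, `|L2ip1 om (f i) (iota w i)| <= M * `|w|.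
    by move=> i; exact: (bound_L2 Hiota Hmeas (Hf i)).
  move=> /choice [Mf hMf].
  have [M1 h1] := bound_L2 Hiota Hmeas (iotaL2 Hiota yprev i3) i3.
  have [M2 h2] := bound_L2 Hiota Hmeas hg i3.
  have lbnd : forall w, `|lform om ip iota f eps yprev w|
      <= ((\sum_i Mf i) + `|yprev| + `|eps^-1| * M1 + `|(2 * eps)^-1| * M2) * `|w|.
    move=> w; rewrite /lform !mulrDl.
    apply: (le_trans (ler_normB _ _)); apply: lerD; last first.
      by rewrite normrM -mulrA; apply: ler_wpM2l.
    apply: (le_trans (ler_normB _ _)); apply: lerD; last first.
      by rewrite normrM -mulrA; apply: ler_wpM2l.
    apply: (le_trans (ler_normB _ _)); apply: lerD; last exact: ip_CS.
    rewrite /L2ip3 mulr_suml; apply: (le_trans (ler_norm_sum _ _ _)).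
    by apply: ler_sum => i _; exact: hMf.
  have [d [Fd Hd]] := lax_milgram (HF k) asym alin acoer abnd llin lbnd.
  have charac : forall d', ccv_step om ip iota f eps tau (F k) yprev d' <->
      F k d' /\ forall w, F k w -> aform om ip iota eps tau d' w = lform om ip iota f eps yprev w.
    move=> d'; split; move=> [Fd' H]; split => // w Fw.
      have := ccv_identity Hmeas Hip Hiota f tau heps yprev d' w.
      by rewrite H // subrr => /eqP; rewrite eq_sym subr_eq0 => /eqP.
    by apply/eqP; rewrite -subr_eq0 ccv_identity // H // subrr eqxx.
  exists d; split; first exact/(charac d).
  move=> d' /(charac d') [Fd' Hd'].
  have [_ [_ FL]] := HF k.
  have Fv : F k (1 *: d' + (-1) *: d) by apply: (FL) => //; rewrite -[_ *: d]addr0; apply: (FL) => //; case: (HF k) => _ [].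
  set v := 1 *: d' + (-1) *: d in Fv.
  have hv : aform om ip iota eps tau v v = 0.
    have [_ aD aZ _] := @lin_facts R W (fun x => aform om ip iota eps tau x v) (fun s x y => alin s x y v).
    rewrite {1}/v aD !aZ Hd // Hd' //; ring.
  have := acoer v; rewrite hv => hv2.
  have : `|v| = 0 by apply/eqP; rewrite -sqrf_eq0 eq_le hv2 sqr_ge0.
  move/normr0_eq0; rewrite /v scale1r scaleN1r => /eqP; rewrite subr_eq0 => /eqP ->.
  done.
- move=> y _ Hstep k.
  have [FD HD] := Hstep k.
  set D := dt tau y k in FD HD *.
  have eY : y k.+1 = y k + tau *: D.
    by rewrite /D /dt scalerA mulfV ?gt_eqF // scale1r addrC subrK.
  have hA : aform om ip iota eps tau D D = lform om ip iota f eps (y k) D.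
    apply/eqP; rewrite -subr_eq0 -(ccv_identity Hmeas Hip Hiota f tau heps (y k) D D).
    by rewrite HD // subrr.
  rewrite eY /Ienergy /Peps.
  have eN : `|y k + tau *: D| ^+ 2 = `|y k| ^+ 2 + 2 * tau * ip (y k) D + tau ^+ 2 * `|D| ^+ 2.
    have q := @quadE R W ip Hs Hl 1 tau (y k) D.
    rewrite scale1r in q; rewrite -!Hn q; ring.
  have eL : L2ip3 om f (iota (y k + tau *: D))
      = tau * L2ip3 om f (iota D) + L2ip3 om f (iota (y k)).
    by rewrite addrC (Lf_lin Hiota).
  have e3 : iota (y k + tau *: D) i3 = (fun p => tau * iota D i3 p + iota (y k) i3 p).
    by rewrite addrC (iotaE Hiota).
  have hI := int_ineq Hmeas (iotaL2 Hiota (y k) i3) (iotaL2 Hiota D i3) tau.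
  rewrite L2ip1_lin // in hI; try exact: (iotaL2 Hiota).
  rewrite eN eL e3.
  rewrite /aform /lform Hn in hA.
  set PY := Rintegral (@leb2 R) om (fun x => pos_part (tau * iota D i3 x + iota (y k) i3 x - 1) ^+ 2) in hI *.
  set PX := Rintegral (@leb2 R) om (fun x => pos_part (iota (y k) i3 x - 1) ^+ 2) in hI *.
  set LD := L2ip3 om f (iota D) in hA *.
  set LX := L2ip3 om f (iota (y k)).
  set DD := L2ip1 om (iota D i3) (iota D i3) in hA hI.
  set XD := L2ip1 om (iota (y k) i3) (iota D i3) in hA hI.
  set GD := L2ip1 om (fun x => p_ccv (iota (y k) i3 x)) (iota D i3) in hA hI.
  set iXD := ip (y k) D in hA *.
  set nX := `|y k| ^+ 2.
  set nD := `|D| ^+ 2 in hA *.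
  have ie : (2 * eps)^-1 = 2^-1 * eps^-1 by rewrite invfM.
  have ep : 0 <= eps^-1 by rewrite invr_ge0 ltW.
  rewrite ie; rewrite ie in hA.
  set e := eps^-1 in hA ep *.
  have key : 2^-1 * (nX + 2 * tau * iXD + tau ^+ 2 * nD) - (tau * LD + LX) +
      2^-1 * e * PY + tau * nD - (2^-1 * nX - LX + 2^-1 * e * PX)
    = - (2^-1 * tau ^+ 2 * nD) + 2^-1 * e * ((PY - PX) - (2 * tau * (tau * DD + XD) + tau * GD))
      + tau * (((1 + tau) * nD + tau * e * DD) - (LD - iXD - e * XD - 2^-1 * e * GD)).
    by field.
  rewrite -subr_le0 key hA subrr mulr0 addr0.
  have h1 : 2^-1 * e * ((PY - PX) - (2 * tau * (tau * DD + XD) + tau * GD)) <= 0.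
    by apply: mulr_ge0_le0; [rewrite mulr_ge0 | rewrite subr_le0].
  have h2 : 0 <= 2^-1 * tau ^+ 2 * nD.
    by apply: mulr_ge0; [apply: mulr_ge0; [rewrite invr_ge0 | exact: sqr_ge0] | exact: sqr_ge0].
  lra.
Qed.
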